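(* Consider a tranca mínima (as defined in the context), and let $k\in\{1,2,3,4,5,6\}$. If neither of the two players of the losing team has, in their initial hand, any tile containing the number $0$ or the number $k$, then at least one of the two players of the losing team places at least one tile during the game.
   Context: Domino tiles: the set of tiles consists of the 28 unordered pairs $[a,b]=[b,a]$ with $a,b\in\{0,1,\dots,6\}$; the number of points (pips) of $[a,b]$ is $a+b$. Four players, numbered 1 to 4, play; players 1 and 3 form one team and players 2 and 4 the other. The 28 tiles are dealt, 7 to each player (the initial hands). Players take turns in cyclic order $1,2,3,4,1,\dots$. The starting player places any one of their tiles on the table, forming a line of tiles (the board) with two open ends. On each subsequent turn, the player whose turn it is must, if they hold a tile containing a number equal to the number shown at one of the two open ends, place such a tile at that end (with equal numbers adjacent), the other number of the tile becoming the new open end; if they hold no such tile, they pass. A game ends either when a player places their last tile, or in a tranca (blocked game): a position in which no player holds a tile that can be placed. In a game ending in a tranca, the team whose two players' remaining tiles have the smaller total number of pips wins, and the other team is the losing team. A tranca mínima is a game ending in a tranca in which the total number of pips on the tiles of the board at the end of the game is $42$. *)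

(* Defs.v *)
(* Dominoes: players 1..4 are represented by 'I_4 = {0,1,2,3}
   (player i+1 <-> index i); team of players 1,3 = even indices, team of 2,4 = odd. *)
From mathcomp Require Import all_boot.
Set Implicit Arguments. Unset Strict Implicit. Unset Printing Implicit Defensive.

(* A tile [a,b] = [b,a] is represented by its normal form (a,b) with a <= b. *)
Definition tile := {t : 'I_7 * 'I_7 | t.1 <= t.2}.

Definition pips (t : tile) : nat := (sval t).1 + (sval t).2.

Definition has_num (t : tile) (v : 'I_7) : bool := ((sval t).1 == v) || ((sval t).2 == v).

Definition other (t : tile) (v : 'I_7) : 'I_7 :=
  if (sval t).1 == v then (sval t).2 else (sval t).1.

Definition deal := tile -> 'I_4.
Definition valid_deal (d : deal) : Prop := forall p : 'I_4, #|[set t | d t == p]| = 7.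

(* open ends of the board: None before the first move *)
Definition ends := option ('I_7 * 'I_7).

Definition hand (d : deal) (played : seq tile) (p : 'I_4) : {set tile} :=
  [set t | (d t == p) && (t \notin played)].

Definition playable (e : ends) (t : tile) : bool :=
  match e with
  | None => true
  | Some (l, r) => has_num t l || has_num t r
  end.

Definition blocked (d : deal) (e : ends) (played : seq tile) : bool :=
  [forall p : 'I_4, [forall t in hand d played p, ~~ playable e t]].

Definition someone_out (d : deal) (played : seq tile) : bool :=
  [exists p : 'I_4, hand d played p == set0].

Definition terminal (d : deal) (e : ends) (played : seq tile) : bool :=
  someone_out d played || (isSome e && blocked d e played).

(* whose turn is the i-th move (0-based); the starting player is player 1 *)
Definition turn (i : nat) : 'I_4 := inord (i %% 4).

(* a move: pass, or place a tile at the left (true) / right (false) open end *)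
Inductive move := Pass | Play of tile & bool.

Fixpoint valid_from (d : deal) (e : ends) (played : seq tile) (i : nat)
    (ms : seq move) : Prop :=
  match ms with
  | [::] => terminal d e played
  | m :: ms' =>
      ~~ terminal d e played /\
      let h := hand d played (turn i) in
      match m with
      | Pass => [forall t in h, ~~ playable e t] /\ valid_from d e played i.+1 ms'
      | Play t lft =>
          t \in h /\
          match e with
          | None => valid_from d (Some ((sval t).1, (sval t).2)) (t :: played) i.+1 ms'
          | Some (l, r) =>
              if lft then
                has_num t l /\ valid_from d (Some (other t l, r)) (t :: played) i.+1 ms'
              else
                has_num t r /\ valid_from d (Some (l, other t r)) (t :: played) i.+1 ms'
          end
      end
  end.

Definition game (d : deal) (ms : seq move) : Prop := valid_from d None [::] 0 ms.

Definition placed_tiles (ms : seq move) : seq tile :=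
  flatten [seq (if m is Play t _ then [:: t] else [::]) | m <- ms].

Fixpoint final_ends (e : ends) (ms : seq move) : ends :=
  match ms with
  | [::] => e
  | Pass :: ms' => final_ends e ms'
  | Play t lft :: ms' =>
      match e with
      | None => final_ends (Some ((sval t).1, (sval t).2)) ms'
      | Some (l, r) =>
          final_ends (if lft then Some (other t l, r) else Some (l, other t r)) ms'
      end
  end.

Definition ends_in_tranca (d : deal) (ms : seq move) : Prop :=
  ~~ someone_out d (placed_tiles ms) /\
  isSome (final_ends None ms) /\ blocked d (final_ends None ms) (placed_tiles ms).

Definition board_pips (ms : seq move) : nat := \sum_(t <- placed_tiles ms) pips t.

Definition tranca_minima (d : deal) (ms : seq move) : Prop :=
  game d ms /\ ends_in_tranca d ms /\ board_pips ms = 42.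

(* team b: players with odd index == b  (b = false: players 1,3; b = true: players 2,4) *)
Definition in_team (b : bool) (p : 'I_4) : bool := odd p == b.

Definition remaining_pips (d : deal) (ms : seq move) (b : bool) : nat :=
  \sum_(t : tile | in_team b (d t) && (t \notin placed_tiles ms)) pips t.

Definition losing_team (d : deal) (ms : seq move) (b : bool) : Prop :=
  remaining_pips d ms (~~ b) < remaining_pips d ms b.

Definition is_play (m : move) : bool := if m is Play _ _ then true else false.

(* Main.v *)
Require Import Defs.
From mathcomp Require Import all_boot.
From mathcomp Require Import zify.
Set Implicit Arguments. Unset Strict Implicit. Unset Printing Implicit Defensive.

Definition h (t : tile) (x : 'I_7) : nat := ((sval t).1 == x) + ((sval t).2 == x).

Definition mkT (a b : nat) (Ha : a < 7) (Hb : b < 7) (H : a <= b) : tile :=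
  exist (fun p : 'I_7 * 'I_7 => p.1 <= p.2) (Ordinal Ha, Ordinal Hb) H.

Arguments mkT : clear implicits.
Definition L : seq tile := [:: mkT 0 0 erefl erefl erefl;
  mkT 0 1 erefl erefl erefl;
  mkT 0 2 erefl erefl erefl;
  mkT 0 3 erefl erefl erefl;
  mkT 0 4 erefl erefl erefl;
  mkT 0 5 erefl erefl erefl;
  mkT 0 6 erefl erefl erefl;
  mkT 1 1 erefl erefl erefl;
  mkT 1 2 erefl erefl erefl;
  mkT 1 3 erefl erefl erefl;
  mkT 1 4 erefl erefl erefl;
  mkT 1 5 erefl erefl erefl;
  mkT 1 6 erefl erefl erefl;
  mkT 2 2 erefl erefl erefl;
  mkT 2 3 erefl erefl erefl;
  mkT 2 4 erefl erefl erefl;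
  mkT 2 5 erefl erefl erefl;
  mkT 2 6 erefl erefl erefl;
  mkT 3 3 erefl erefl erefl;
  mkT 3 4 erefl erefl erefl;
  mkT 3 5 erefl erefl erefl;
  mkT 3 6 erefl erefl erefl;
  mkT 4 4 erefl erefl erefl;
  mkT 4 5 erefl erefl erefl;
  mkT 4 6 erefl erefl erefl;
  mkT 5 5 erefl erefl erefl;
  mkT 5 6 erefl erefl erefl;
  mkT 6 6 erefl erefl erefl].
Definition L7 : seq 'I_7 := [:: @Ordinal 7 0 erefl; @Ordinal 7 1 erefl; @Ordinal 7 2 erefl; @Ordinal 7 3 erefl; @Ordinal 7 4 erefl; @Ordinal 7 5 erefl; @Ordinal 7 6 erefl].

Lemma mem_L7 (x : 'I_7) : x \in L7.
Proof.
rewrite -(mem_map val_inj). have -> : map val L7 = iota 0 7 by [].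
by rewrite mem_iota /= ltn_ord.
Qed.

Lemma uniq_L7 : uniq L7. Proof. by []. Qed.
Lemma uniq_L : uniq L. Proof. by vm_compute. Qed.

Definition fT (t : tile) : nat * nat := (val (sval t).1, val (sval t).2).
Lemma fT_inj : injective fT.
Proof.
move=> [[a b] Hab] [[a' b'] Hab'] [] /val_inj ea /val_inj eb.
subst; congr exist; exact: bool_irrelevance.
Qed.

Lemma mem_L (t : tile) : t \in L.
Proof.
rewrite -(mem_map fT_inj).
have -> : map fT L = [seq (a, b) | a <- iota 0 7, b <- iota a (7 - a)] by vm_compute.
case: t => [[a b] Hab]; rewrite /fT.
apply/allpairsPdep; exists (val a), (val b); rewrite !mem_iota ltn_ord; split=> //.
by rewrite Hab /= subnKC ?ltn_ord // ltnW ?ltn_ord.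
Qed.

Lemma sumL (P : pred tile) (F : tile -> nat) :
  \sum_(t | P t) F t = \sum_(t <- L | P t) F t.
Proof.
apply: perm_big; apply: uniq_perm; first exact: index_enum_uniq.
  exact: uniq_L.
by move=> t; rewrite mem_index_enum mem_L.
Qed.

Lemma sumL7 (P : pred 'I_7) (F : 'I_7 -> nat) :
  \sum_(t | P t) F t = \sum_(t <- L7 | P t) F t.
Proof.
apply: perm_big; apply: uniq_perm; first exact: index_enum_uniq.
  exact: uniq_L7.
by move=> t; rewrite mem_index_enum mem_L7.
Qed.

Lemma all7 (P : pred 'I_7) : all P L7 -> forall x, P x.
Proof. by move=> /allP H x; apply: H; exact: mem_L7. Qed.
Lemma allT (P : pred tile) : all P L -> forall x, P x.
Proof. by move=> /allP H x; apply: H; exact: mem_L. Qed.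

Lemma cardS (T : finType) (A : pred T) : #|A| = \sum_(t : T) (A t : nat).
Proof.
rewrite -sum1_card big_mkcond /=; apply: eq_bigr => t _.
by rewrite unfold_in; case: (A t).
Qed.

Lemma F1 (l : 'I_7) : \sum_(t : tile) h t l = 8.
Proof.
rewrite sumL; apply/eqP; move: l; apply: (@all7 (fun l => \sum_(t <- L) h t l == 8)).
by rewrite !unlock; vm_compute.
Qed.

Lemma F3 (v x : 'I_7) : exists t, has_num t v && has_num t x.
Proof.
have : has (fun t => has_num t v && has_num t x) L.
  move: x; apply: (@all7 (fun x => has (fun t => has_num t v && has_num t x) L)).
  move: v; apply: (@all7 (fun v => all (fun x => has (fun t => has_num t v && has_num t x) L) L7)).
  by vm_compute.
by case/hasP => t _ H; exists t.
Qed.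

Lemma F5 (t : tile) : \sum_(x : 'I_7) h t x = 2.
Proof.
rewrite sumL7; apply/eqP; move: t; apply: (@allT (fun t => \sum_(x <- L7) h t x == 2)).
by rewrite !unlock; vm_compute.
Qed.

Lemma F4 (t : tile) : pips t = \sum_(x : 'I_7) x * h t x.
Proof.
rewrite sumL7; apply/eqP; move: t; apply: (@allT (fun t => pips t == \sum_(x <- L7) x * h t x)).
by rewrite !unlock; vm_compute.
Qed.

Lemma F6 : \sum_(t : tile) (has_num t ord0 : nat) = 7.
Proof. by rewrite sumL !unlock; vm_compute. Qed.

Lemma F7 (k : 'I_7) : k != ord0 -> \sum_(t : tile) has_num t ord0 * h t k = 1.
Proof.
move=> Hk; rewrite sumL; apply/eqP.
suff /(_ k) : forall k : 'I_7, (k != ord0) ==> (\sum_(t <- L) has_num t ord0 * h t k == 1) by rewrite Hk.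
by apply: all7; rewrite !unlock; vm_compute.
Qed.

Lemma F8 (k : 'I_7) : k != ord0 ->
  \sum_(t : tile) ((~~ has_num t ord0 && ~~ has_num t k) : nat) = 15.
Proof.
move=> Hk; rewrite sumL; apply/eqP.
suff /(_ k) : forall k : 'I_7, (k != ord0) ==> (\sum_(t <- L) ((~~ has_num t ord0 && ~~ has_num t k) : nat) == 15) by rewrite Hk.
by apply: all7; rewrite !unlock; vm_compute.
Qed.

Lemma G1 (v : 'I_7) : \sum_(x : 'I_7) x * (if x == v then 8 else 2) = 42 + 6 * v.
Proof.
rewrite sumL7; apply/eqP; move: v; apply: (@all7 (fun v => \sum_(x <- L7) x * (if x == v then 8 else 2) == 42 + 6 * v)).
by rewrite !unlock; vm_compute.
Qed.

Lemma G2 : \sum_(x : 'I_7) (if x == ord0 then 8 else 2) = 20.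
Proof. by rewrite sumL7 !unlock; vm_compute. Qed.


Lemma hnum0 t x : ~~ has_num t x -> h t x = 0.
Proof. by rewrite /has_num /h; case: eqP; case: eqP. Qed.
Lemma hnum1 t x : has_num t x -> 0 < h t x.
Proof. by rewrite /has_num /h; case: eqP; case: eqP. Qed.

Lemma leq_sum_eq (I : finType) (F G : I -> nat) x :
  \sum_i G i <= \sum_i F i -> (forall i, F i <= G i) -> G x <= F x.
Proof.
move=> Hs H.
have le := @leq_sum _ (index_enum I) (fun i => i != x) F G (fun i _ => H i).
rewrite (bigD1 x) //= [X in _ <= X](bigD1 x) //= in Hs.
move: Hs le; set a := \sum_(i | i != x) F i; set b := \sum_(i | i != x) G i.
lia.
Qed.

Lemma comb (P : pred tile) (v k : 'I_7) :
  (forall t, has_num t v -> P t) ->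
  (forall x, ~~ odd (\sum_(t | P t) h t x)) ->
  \sum_(t | P t) pips t = 42 -> k != ord0 ->
  1 < \sum_(t | P t) ((~~ has_num t ord0 && ~~ has_num t k) : nat).
Proof.
move=> HP Hodd H42 Hk.
pose c x := \sum_(t | P t) h t x.
have cv : c v = 8.
  rewrite /c big_mkcond -(F1 v); apply: eq_bigr => t _.
  case: ifP => // Pt; case Hn: (has_num t v); first by rewrite (HP t Hn) in Pt.
  by rewrite hnum0 ?Hn.
have cx : forall x, x != v -> 2 <= c x.
  move=> x _; have [t /andP[Hv Hx]] := F3 v x.
  have : 0 < c x.
    rewrite /c (bigD1 t) ?HP //=.
    exact: (leq_trans (hnum1 Hx) (leq_addr _ _)).
  have := Hodd x; rewrite -/(c x).
  by case: (c x) => [|[|n]].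
have sum42 : \sum_(x : 'I_7) x * c x = 42.
  rewrite -H42 (eq_bigr _ (fun t _ => F4 t)) exchange_big /=.
  by apply: eq_bigr => x _; rewrite /c big_distrr.
have ge : \sum_(x : 'I_7) x * (if x == v then 8 else 2) <= \sum_(x : 'I_7) x * c x.
  apply: leq_sum => x _; case: eqP => [->|/eqP ne]; first by rewrite cv.
  by rewrite leq_mul2l (cx x ne) orbT.
rewrite G1 sum42 in ge.
have v0 : v = ord0 by apply: val_inj => /=; lia.
subst v.
have eqx : forall x, x != ord0 -> c x = 2.
  move=> x nx.
  have xpos : 0 < x by rewrite lt0n; apply: contra nx => /eqP ex; apply/eqP/val_inj.
  have := @leq_sum_eq _ (fun i : 'I_7 => i * (if i == ord0 then 8 else 2)) (fun i => i * c i) x.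
  rewrite sum42 G1 (negbTE nx) => /(_ (leq_addr _ _)).
  have := cx x nx.
  move=> h1 h2; have : x * c x <= x * 2.
    apply: h2 => i; case: eqP => [->|/eqP ne]; first by rewrite cv.
    by rewrite leq_mul2l (cx i ne) orbT.
  rewrite leq_mul2l; case/orP => [/eqP|]; first by lia.
  by lia.
have sumc : \sum_(x : 'I_7) c x = 20.
  rewrite -G2; apply: eq_bigr => x _; case: eqP => [->|/eqP ne] //.
  exact: eqx.
have card10 : \sum_(t | P t) 1 = 10.
  have : \sum_(t | P t) 2 = 20.
    rewrite -sumc (eq_bigr (fun t => \sum_(x : 'I_7) h t x)) => [|t _]; last by rewrite F5.
    by rewrite exchange_big.
  have -> : \sum_(t | P t) 2 = 2 * \sum_(t | P t) 1.
    by rewrite big_distrr.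
  lia.
have cover : \sum_(t | P t) 1 <= \sum_(t | P t) (((~~ has_num t ord0 && ~~ has_num t k) : nat)
      + (has_num t ord0 : nat) + (~~ has_num t ord0) * h t k).
  apply: leq_sum => t _; case: (has_num t ord0) => /=; first by rewrite addn0.
  case Hkt: (has_num t k) => /=; last by [].
  by rewrite mul1n add0n; apply: hnum1.
rewrite !big_split /= card10 in cover.
have s0 : \sum_(t | P t) (has_num t ord0 : nat) <= 7.
  rewrite -[X in _ <= X]F6 big_mkcond; apply: leq_sum => t _; by case: (P t).
have sk : \sum_(t | P t) (~~ has_num t ord0) * h t k = 1.
  have := eqx k Hk; rewrite /c.
  rewrite (eq_bigr (fun t => has_num t ord0 * h t k + (~~ has_num t ord0) * h t k)); last first.
    by move=> t _; case: (has_num t ord0); rewrite /= ?mul1n ?mul0n ?addn0.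
  rewrite big_split /=.
  have -> : \sum_(t | P t) has_num t ord0 * h t k = 1.
    rewrite -[RHS](F7 Hk) big_mkcond; apply: eq_bigr => t _.
    case: ifP => // Pt; case Hn: (has_num t ord0) => //.
    by rewrite (HP t Hn) in Pt.
  by rewrite add1n => -[].
rewrite sk in cover.
move: cover s0; set A := \sum_(t | P t) _; set B := \sum_(t | P t) _.
lia.
Qed.

Definition cnt (x : 'I_7) (s : seq tile) : nat := \sum_(t <- s) h t x.
Definition endcnt (e : ends) (x : 'I_7) : nat :=
  match e with None => 0 | Some (l, r) => (l == x) + (r == x) end.

Lemma par_l t (l r x : 'I_7) : has_num t l ->
  odd (endcnt (Some (other t l, r)) x) = odd (h t x) (+) odd (endcnt (Some (l, r)) x).
Proof.
rewrite /endcnt /h /other /has_num !oddD !oddb.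
case: ifP => [/eqP <- _ | _ /= /eqP <-];
  by case: (_ == x); case: (_ == x); case: (_ == x).
Qed.

Lemma par_r t (l r x : 'I_7) : has_num t r ->
  odd (endcnt (Some (l, other t r)) x) = odd (h t x) (+) odd (endcnt (Some (l, r)) x).
Proof.
rewrite /endcnt /h /other /has_num !oddD !oddb.
case: ifP => [/eqP <- _ | _ /= /eqP <-];
  by case: (_ == x); case: (_ == x); case: (_ == x).
Qed.

Lemma inv (d : deal) (b : bool) e played i ms :
  valid_from d e played i ms -> uniq played ->
  (forall x, odd (cnt x played) = odd (endcnt e x)) ->
  (forall j, j < size ms -> is_play (nth Pass ms j) -> ~~ in_team b (turn (i + j))) ->
  [/\ uniq (catrev (placed_tiles ms) played),
      forall x, odd (cnt x (catrev (placed_tiles ms) played)) = odd (endcnt (final_ends e ms) x) &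
      forall t, t \in placed_tiles ms -> ~~ in_team b (d t)].
Proof.
elim: ms e played i => [|m ms IH] e played i /=.
  by move=> _ U P _; split.
case: m => [|t lft] [_ V] U Par Tm.
  case: V => _ V.
  have Tm' : forall j, j < size ms -> is_play (nth Pass ms j) -> ~~ in_team b (turn (i.+1 + j)).
    by move=> j Hj Pj; rewrite addSn -addnS; apply: (Tm j.+1).
  exact: IH V U Par Tm'.
case: V => Ht V.
move: Ht; rewrite inE => /andP[/eqP dt tnp].
have Tm' : forall j, j < size ms -> is_play (nth Pass ms j) -> ~~ in_team b (turn (i.+1 + j)).
  by move=> j Hj Pj; rewrite addSn -addnS; apply: (Tm j.+1).
have T0 : ~~ in_team b (d t) by rewrite dt -[i]addn0; apply: (Tm 0).
have U' : uniq (t :: played) by rewrite /= tnp U.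
have cntc : forall x, cnt x (t :: played) = h t x + cnt x played.
  by move=> x; rewrite /cnt big_cons.
have fin : forall e' , (forall x, odd (cnt x (t :: played)) = odd (endcnt e' x)) ->
   valid_from d e' (t :: played) i.+1 ms ->
   [/\ uniq (catrev (placed_tiles (Play t lft :: ms)) played),
      forall x, odd (cnt x (catrev (placed_tiles (Play t lft :: ms)) played)) = odd (endcnt (final_ends e' ms) x) &
      forall t', t' \in placed_tiles (Play t lft :: ms) -> ~~ in_team b (d t')].
  move=> e' Par' V'; have [U2 P2 T2] := IH e' (t :: played) i.+1 V' U' Par' Tm'.
  split=> // t'; rewrite /= inE => /orP[/eqP -> //|]; exact: T2.
case: e Par V => [[l r]|] Par V.
  destruct lft; case: V => [Hl V]; apply: fin V => x; rewrite cntc oddD Par.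
    by rewrite par_l.
  by rewrite par_r.
apply: fin V => x; rewrite cntc oddD Par /=.
by rewrite /h oddD !oddb addbF.
Qed.

Lemma allin (P : pred tile) v : (forall t, has_num t v -> P t) -> \sum_(t | P t) h t v = 8.
Proof.
move=> HP; rewrite big_mkcond -[RHS](F1 v); apply: eq_bigr => t _.
case: ifP => // Pt; case Hn: (has_num t v); first by rewrite (HP t Hn) in Pt.
by rewrite hnum0 ?Hn.
Qed.

Lemma cardSet (T : finType) (S : {set T}) : #|S| = \sum_(t : T) ((t \in S) : nat).
Proof.
rewrite -sum1_card big_mkcond /=; apply: eq_bigr => t _.
by case: (t \in S).
Qed.

Lemma team14 (d : deal) b : valid_deal d -> 14 <= \sum_(t : tile) (in_team b (d t) : nat).
Proof.
move=> Vd; case: b.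
  have e1 := Vd (@Ordinal 4 1 erefl); have e3 := Vd (@Ordinal 4 3 erefl).
  rewrite !cardSet in e1 e3.
  have : \sum_(t : tile) ((t \in [set t | d t == @Ordinal 4 1 erefl]) + (t \in [set t | d t == @Ordinal 4 3 erefl]))
       <= \sum_(t : tile) (in_team true (d t) : nat).
    apply: leq_sum => t _; rewrite !inE /in_team; by case: (d t) => [[|[|[|[|q]]]] Hq].
  by rewrite big_split /= e1 e3.
have e1 := Vd (@Ordinal 4 0 erefl); have e3 := Vd (@Ordinal 4 2 erefl).
rewrite !cardSet in e1 e3.
have : \sum_(t : tile) ((t \in [set t | d t == @Ordinal 4 0 erefl]) + (t \in [set t | d t == @Ordinal 4 2 erefl]))
     <= \sum_(t : tile) (in_team false (d t) : nat).
  apply: leq_sum => t _; rewrite !inE /in_team; by case: (d t) => [[|[|[|[|q]]]] Hq].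
by rewrite big_split /= e1 e3.
Qed.

Unset Implicit Arguments.
Theorem mainTheorem4 (d : deal) (ms : seq move) (b : bool) (k : 'I_7) :
  valid_deal d ->
  tranca_minima d ms ->
  losing_team d ms b ->
  1 <= k ->
  (forall t : tile, in_team b (d t) -> ~~ has_num t ord0 && ~~ has_num t k) ->
  exists2 j, j < size ms & is_play (nth Pass ms j) && in_team b (turn j).
Proof.
move=> Vd [G [[_ [So Bl]] H42]] _ Hk1 Hb.
case: (boolP (has (fun j => is_play (nth Pass ms j) && in_team b (turn j)) (iota 0 (size ms)))).
  by case/hasP => j; rewrite mem_iota add0n => /andP[_ Hj] Hq; exists j.
move/hasPn => Hn.
have Tm : forall j, j < size ms -> is_play (nth Pass ms j) -> ~~ in_team b (turn (0 + j)).
  move=> j Hj Pj; have := Hn j; rewrite mem_iota add0n Hj Pj /= => /(_ isT) //.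
have [U Par Tm2] := inv G (isT : uniq (@nil tile)) (fun x => ltac:(by rewrite /cnt big_nil)) Tm.
set s := placed_tiles ms in U Par Tm2 So Bl H42.
have Us : uniq s by rewrite -rev_uniq.
have cntE : forall x, cnt x (catrev s [::]) = \sum_(t | t \in s) h t x.
  by move=> x; rewrite /cnt -/(rev s) big_rev big_uniq.
move: Par Bl So; case: (final_ends None ms) => [[l r]|] // Par Bl _.
have Bl' : forall t, t \notin s -> ~~ has_num t l && ~~ has_num t r.
  move=> t nt; move/forallP: Bl => /(_ (d t)) /forallP /(_ t).
  by rewrite /hand inE eqxx nt /= negb_or.
have HPl : forall t, has_num t l -> t \in s.
  by move=> t Ht; apply: contraT => /Bl' /andP[/negP].
case: (eqVneq l r) => [er | nlr].
  subst r.
  have Hk : k != ord0 by rewrite -lt0n.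
  have := @comb (fun t => t \in s) l k HPl.
  have Hodd : forall x, ~~ odd (\sum_(t | t \in s) h t x).
    by move=> x; rewrite -cntE Par /endcnt oddD addbb.
  have H42' : \sum_(t | t \in s) pips t = 42 by rewrite -big_uniq.
  move=> /(_ Hodd H42' Hk) A2.
  have N15 := F8 Hk.
  have : \sum_(t | t \in s) ((~~ has_num t ord0 && ~~ has_num t k) : nat)
       + \sum_(t : tile) (in_team b (d t) : nat)
       <= \sum_(t : tile) ((~~ has_num t ord0 && ~~ has_num t k) : nat).
    rewrite big_mkcond -big_split /=; apply: leq_sum => t _.
    case Ht: (in_team b (d t)); last by rewrite addn0; case: (t \in s).
    have := Hb t Ht; move=> ->.
    have -> : (t \in s) = false by apply/negP => /Tm2; rewrite Ht.
    by [].
  have := team14 b Vd.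
  rewrite N15.
  move: A2; set A := \sum_(t | t \in s) _; set B := \sum_(t : tile) _.
  lia.
exfalso.
have := Par l; rewrite cntE allin // /endcnt eqxx eq_sym (negbTE nlr).
by [].
Qed.
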